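(* Let $D\in\mathbb{R}^{d\times d}$ be symmetric positive definite and $C\in\mathbb{R}^{d\times d}$ positively stable, and let $K$ be the symmetric positive definite solution of $2D=CK+KC^T$. Let $\lambda_K$ be the smallest eigenvalue of $\sqrt D K^{-1}\sqrt D$ and $\mu:=\min\{\operatorname{Re}\lambda:\lambda\in\sigma(C)\}$. Then: (i) $\lambda_K\le\mu$; (ii) if $C$ is diagonalizable, so that $\tilde C:=\sqrt D^{-1}C\sqrt D=\tilde A\Lambda\tilde A^{-1}$ with $\Lambda$ diagonal and $\tilde A$ invertible, then $\mu\le\kappa(\tilde A)^2\lambda_K$, where $\kappa(\tilde A):=\|\tilde A\|_2\|\tilde A^{-1}\|_2$.
   Context: Positively stable: all eigenvalues have strictly positive real part. $\sqrt D$ is the symmetric positive definite square root; $\|\cdot\|_2$ is the spectral norm. *)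

(* Defs.v *)
From HB Require Import structures.
From mathcomp Require Import all_boot all_order all_algebra.
From mathcomp Require Import complex.
From mathcomp Require Import boolp classical_sets reals.

Set Implicit Arguments.
Unset Strict Implicit.
Unset Printing Implicit Defensive.

Import Order.TTheory GRing.Theory Num.Theory.
Local Open Scope ring_scope.
Local Open Scope classical_set_scope.

Section Defs.
Variable R : realType.

Definition symmx d (A : 'M[R]_d) : Prop := A^T = A.

Definition posdefmx d (A : 'M[R]_d) : Prop :=
  forall x : 'cV[R]_d, x != 0 -> 0 < (x^T *m A *m x) 0 0.

Definition spdmx d (A : 'M[R]_d) : Prop := symmx A /\ posdefmx A.

Definition is_sqrtmx d (D S : 'M[R]_d) : Prop := spdmx S /\ S *m S = D.

Definition cplxmx m n (A : 'M[R]_(m, n)) : 'M[R[i]]_(m, n) :=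
  map_mx (fun x : R => (x%:C)%C) A.

Definition spectrum d (C : 'M[R]_d) : set R[i] :=
  [set l | eigenvalue (cplxmx C) l].

Definition pos_stable d (C : 'M[R]_d) : Prop :=
  forall l, l \in spectrum C -> 0 < complex.Re l.

Definition is_min_re_spec d (C : 'M[R]_d) (m : R) : Prop :=
  (exists2 l : R[i], l \in spectrum C & complex.Re l = m) /\
  (forall l, l \in spectrum C -> m <= complex.Re l).

Definition is_min_eig d (M : 'M[R]_d) (l : R) : Prop :=
  eigenvalue M l /\ (forall l', eigenvalue M l' -> l <= l').

Definition cvnorm d (x : 'cV[R[i]]_d) : R :=
  Num.sqrt (\sum_(k < d) (ComplexField.Normc.normc (x k 0)) ^+ 2).

Definition spnorm d (A : 'M[R[i]]_d) : R :=
  sup [set cvnorm (A *m x) | x in [set x : 'cV[R[i]]_d | cvnorm x = 1]].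

Definition condnum d (A : 'M[R[i]]_d) : R := spnorm A * spnorm (invmx A).

End Defs.

(* Main.v *)
Set Warnings "-notation-overridden -ambiguous-paths".
Require Import Defs.
From HB Require Import structures.
From mathcomp Require Import all_boot all_order all_algebra.
From mathcomp Require Import complex.
From mathcomp Require Import boolp classical_sets reals.
From mathcomp Require Import ring.
Import Order.TTheory GRing.Theory Num.Theory.
Set Implicit Arguments.
Unset Strict Implicit.
Local Open Scope ring_scope.
Local Open Scope sesquilinear_scope.

Section Gen.
Variable C : numClosedFieldType.

Lemma CS n (u v : 'I_n -> C) :
  `|\sum_j u j * v j|^+2 <= (\sum_j `|u j|^+2) * (\sum_j `|v j|^+2).
Proof.
set a := \sum_j `|v j|^+2; set U := \sum_j `|u j|^+2.
set al := \sum_j u j * v j.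
have a0 : 0 <= a by apply: sumr_ge0 => j _; apply: exprn_ge0.
have aR : a^* = a by apply: conj_Creal; apply: ger0_real.
have key : 0 <= a * (a * U - `|al|^+2).
  have : 0 <= \sum_j `|a * (u j)^* - al^* * v j|^+2.
    by apply: sumr_ge0 => j _; apply: exprn_ge0.
  suff -> : \sum_j `|a * (u j)^* - al^* * v j|^+2 = a * (a*U - `|al|^+2) by [].
  transitivity (\sum_j (a * a * (u j * (u j)^*) - a * al * ((u j)^* * (v j)^*)
        - a * al^* * (u j * v j) + al * al^* * (v j * (v j)^*))).
    apply: eq_bigr => j _; rewrite normCK rmorphB !rmorphM /= !conjCK aR; ring.
  rewrite !big_split /= !sumrN -!mulr_sumr.
  have -> : \sum_j (u j)^* * (v j)^* = al^*.
    by rewrite /al rmorph_sum; apply: eq_bigr => j _; rewrite rmorphM.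
  have -> : \sum_j u j * (u j)^* = U by apply: eq_bigr => j _; rewrite normCK.
  have -> : \sum_j v j * (v j)^* = a by apply: eq_bigr => j _; rewrite normCK.
  rewrite -/al normCK; ring.
have [az|apos] := eqVneq a 0.
  have v0 : forall j, v j = 0.
    move=> j; have := @psumr_eq0P _ _ predT (fun j => `|v j|^+2).
    move=> /(_ (fun j _ => exprn_ge0 2 (normr_ge0 (v j)))).
    by move=> /(_ az j isT) => /eqP; rewrite sqrf_eq0 normr_eq0 => /eqP.
  have -> : al = 0 by rewrite /al big1 // => j _; rewrite v0 mulr0.
  rewrite normr0 expr0n /= mulr_ge0 //.
  by apply: sumr_ge0 => j _; apply: exprn_ge0.
have ap : 0 < a by rewrite lt_def apos a0.
rewrite -subr_ge0 mulrC; move: key; by rewrite pmulr_rge0.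
Qed.

Lemma qf_diag n (s : 'rV[C]_n) (w : 'cV[C]_n) :
  (w^t* *m diag_mx s *m w) 0 0 = \sum_k s 0 k * ((w k 0)^* * w k 0).
Proof.
rewrite mxE; apply: eq_bigr => k _; rewrite mul_mx_diag !mxE.
by rewrite mulrCA mulrA.
Qed.

Lemma qf_id n (w : 'cV[C]_n) :
  (w^t* *m w) 0 0 = \sum_k ((w k 0)^* * w k 0).
Proof. by rewrite mxE; apply: eq_bigr => k _; rewrite !mxE. Qed.

Lemma herm_lb n (E : 'M[C]_n) (t : C) :
  E \is hermsymmx ->
  (forall z : 'cV[C]_n, z != 0 -> forall e, E *m z = e *: z -> t <= e) ->
  forall y : 'cV[C]_n, t * (y^t* *m y) 0 0 <= (y^t* *m E *m y) 0 0.
Proof.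
move=> hE hev y.
have /orthomx_spectralP EE := hermitian_normalmx hE.
set P := spectralmx E in EE; set s := spectral_diag E in EE.
have Pu : P \is unitarymx by exact: spectral_unitarymx.
have PPt : P *m P^t* = 1%:M by apply/unitarymxP.
have PtP : P^t* *m P = 1%:M by apply: mulmx1C.
rewrite invmx_unitary // in EE.
have EPt : E *m P^t* = P^t* *m diag_mx s.
  by rewrite EE -!mulmxA PPt mulmx1.
have sj : forall j, t <= s 0 j.
  move=> j; apply: (hev (col j (P^t*)) _ (s 0 j)).
    apply/eqP => /matrixP c0.
    have := congr1 (fun M : 'M[C]_n => M j j) PPt; rewrite !mxE eqxx /=.
    rewrite big1 => [|k _]; last first.
    by have := c0 k 0; rewrite !mxE => ->; rewrite mulr0.
    by move/eqP; rewrite eq_sym oner_eq0.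
  apply/matrixP => i k; rewrite ord1 [RHS]mxE [X in _ * X]mxE mulrC.
  have := congr1 (fun M : 'M[C]_n => M i j) EPt; rewrite mul_mx_diag !mxE => <-.
  by apply: eq_bigr => l _; rewrite !mxE.
have -> : y^t* *m E *m y = (P *m y)^t* *m diag_mx s *m (P *m y).
  by rewrite EE trmx_mul map_mxM !mulmxA.
rewrite qf_diag.
have -> : (y^t* *m y) = (P *m y)^t* *m (P *m y).
  by rewrite trmx_mul map_mxM -mulmxA (mulmxA _ P) PtP mul1mx.
rewrite qf_id mulr_sumr; apply: ler_sum => k _.
by apply: ler_wpM2r => //; rewrite mulrC mul_conjC_ge0.
Qed.
Definition qf n (x : 'cV[C]_n) : C := (x^t* *m x) 0 0.

Lemma qfE n (x : 'cV[C]_n) : qf x = \sum_k `|x k 0|^+2.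
Proof. by rewrite /qf qf_id; apply: eq_bigr => k _; rewrite normCK mulrC. Qed.

Lemma qf_ge0 n (x : 'cV[C]_n) : 0 <= qf x.
Proof. by rewrite qfE; apply: sumr_ge0 => k _; apply: exprn_ge0. Qed.

Lemma qf_eq0 n (x : 'cV[C]_n) : (qf x == 0) = (x == 0).
Proof.
apply/idP/idP => [|/eqP->]; last first.
  by rewrite qfE big1 // => k _; rewrite mxE normr0 expr0n.
rewrite qfE => /eqP h; apply/eqP/matrixP => k l; rewrite ord1 mxE.
have := @psumr_eq0P _ _ predT (fun k => `|x k 0|^+2).
move=> /(_ (fun j _ => exprn_ge0 2 (normr_ge0 _))) /(_ h k isT) /eqP.
by rewrite sqrf_eq0 normr_eq0 => /eqP.
Qed.

Lemma qf_gt0 n (x : 'cV[C]_n) : x != 0 -> 0 < qf x.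
Proof. by move=> x0; rewrite lt_def qf_eq0 x0 qf_ge0. Qed.


Lemma herm_form_real n (H : 'M[C]_n) (z : 'cV[C]_n) : H^t* = H ->
  ((z^t* *m H *m z) 0 0)^* = (z^t* *m H *m z) 0 0.
Proof.
move=> hH.
have e : (z^t* *m H *m z)^t* = z^t* *m H *m z.
  by rewrite !trmx_mul !map_mxM trmxCK hH mulmxA.
by rewrite -[in RHS]e !mxE.
Qed.

Lemma herm_eig_real n (H : 'M[C]_n) (z : 'cV[C]_n) e : H^t* = H -> z != 0 ->
  H *m z = e *: z -> e^* = e.
Proof.
move=> hH z0 hz.
have := herm_form_real z hH; rewrite -mulmxA hz -scalemxAr mxE rmorphM /=.
have qr : (qf z)^* = qf z by apply: conj_Creal; apply: ger0_real; apply: qf_ge0.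
rewrite -/(qf z) qr => /mulIf; apply; rewrite qf_eq0 //.
Qed.

Lemma adjM m n p (X : 'M[C]_(m, n)) (Y : 'M[C]_(n, p)) : (X *m Y)^t* = Y^t* *m X^t*.
Proof. by rewrite trmx_mul map_mxM. Qed.

Lemma adjZ m n (a : C) (X : 'M[C]_(m, n)) : (a *: X)^t* = a^* *: X^t*.
Proof. by rewrite linearZ /= map_mxZ. Qed.

Lemma herm_ub n (H : 'M[C]_n) (a : C) : H^t* = H -> a^* = a ->
  (forall z : 'cV[C]_n, z != 0 -> forall e, H *m z = e *: z -> e <= a) ->
  forall y : 'cV[C]_n, (y^t* *m H *m y) 0 0 <= a * qf y.
Proof.
move=> hH ha hev y.
have := @herm_lb _ (a%:M - H) 0 _ _ y.
have eq : (y^t* *m (a%:M - H) *m y) 0 0 = a * qf y - (y^t* *m H *m y) 0 0.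
  rewrite mulmxBr mulmxBl mul_mx_scalar -scalemxAl.
  by rewrite [LHS]mxE; congr (_ + _); rewrite [LHS]mxE.
rewrite mul0r eq subr_ge0; apply.
  apply/is_hermitianmxP; rewrite expr0 scale1r.
  by rewrite linearB /= map_mxB /= hH tr_scalar_mx map_scalar_mx /= ha.
move=> z z0 e; rewrite mulmxBl mul_scalar_mx => hz.
have hN : H *m z = (a - e) *: z.
  by rewrite scalerBl -hz opprB addrC subrK.
by have := hev z z0 _ hN; rewrite gerDl oppr_le0.
Qed.

Lemma form_conj n (P X : 'M[C]_n) (y : 'cV[C]_n) :
  (y^t* *m (P *m X *m P^t*) *m y) 0 0 = ((P^t* *m y)^t* *m X *m (P^t* *m y)) 0 0.
Proof. by rewrite adjM trmxCK !mulmxA. Qed.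

Lemma form_PPt n (P : 'M[C]_n) (a : C) (y : 'cV[C]_n) :
  (y^t* *m (a *: (P *m P^t*)) *m y) 0 0 = a * qf (P^t* *m y).
Proof. by rewrite -scalemxAr -scalemxAl mxE /qf adjM trmxCK !mulmxA. Qed.

Lemma lyap_form n (L X : 'M[C]_n) (z : 'cV[C]_n) e : X^t* = X ->
  X *m z = e *: z -> e^* = e ->
  (z^t* *m (L *m X + X *m L^t*) *m z) 0 0 =
  e * ((z^t* *m L *m z) 0 0 + (z^t* *m L^t* *m z) 0 0).
Proof.
move=> hX hz he.
have hzt : z^t* *m X = e *: z^t* by rewrite -hX -adjM hz adjZ he.
have e1 : z^t* *m (L *m X) *m z = e *: (z^t* *m L *m z).
  by rewrite mulmxA -mulmxA hz -scalemxAr.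
have e2 : z^t* *m (X *m L^t*) *m z = e *: (z^t* *m L^t* *m z).
  by rewrite mulmxA hzt -!scalemxAl.
rewrite mulmxDr mulmxDl e1 e2 [LHS]mxE mulrDr.
by congr (_ + _); rewrite [LHS]mxE.
Qed.

Lemma conj_lyap n (Ai T N L : 'M[C]_n) (c : C) :
  Ai *m T = L *m Ai -> T^t* *m Ai^t* = Ai^t* *m L^t* ->
  T *m N + N *m T^t* = c%:M ->
  L *m (Ai *m N *m Ai^t*) + (Ai *m N *m Ai^t*) *m L^t* = c *: (Ai *m Ai^t*).
Proof.
move=> h1 h2 hL.
have -> : L *m (Ai *m N *m Ai^t*) = Ai *m (T *m N) *m Ai^t* by rewrite !mulmxA h1.
have -> : Ai *m N *m Ai^t* *m L^t* = Ai *m (N *m T^t*) *m Ai^t*.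
  by rewrite -[LHS]mulmxA -h2 !mulmxA.
by rewrite -mulmxDl -mulmxDr hL mul_mx_scalar -scalemxAl.
Qed.
End Gen.

Section Cplx.
Variable R : realType.
Local Notation C := (R[i]).
Local Notation cR x := ((x%:C)%C).

Lemma normc_C (z : C) : cR (ComplexField.Normc.normc z) = `|z|.
Proof. by case: z => a b; rewrite normc_def. Qed.

Lemma cvnorm_ge0 n (x : 'cV[C]_n) : 0 <= cvnorm x.
Proof. exact: sqrtr_ge0. Qed.

Lemma cvnorm2 n (x : 'cV[C]_n) : cR (cvnorm x ^+ 2) = qf x.
Proof.
rewrite /cvnorm sqr_sqrtr; last by apply: sumr_ge0 => k _; apply: sqr_ge0.
rewrite rmorph_sum qfE; apply: eq_bigr => k _.
by rewrite rmorphXn /= normc_C.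
Qed.

Lemma cR_le (a b : R) : (cR a <= cR b) = (a <= b).
Proof. exact: lecR. Qed.

Lemma cvnorm_le n m (x : 'cV[C]_n) (y : 'cV[C]_m) (a : R) : 0 <= a ->
  qf x <= cR (a ^+ 2) * qf y -> cvnorm x <= a * cvnorm y.
Proof.
move=> a0 h; rewrite -ler_sqr ?nnegrE ?mulr_ge0 ?cvnorm_ge0 //.
by rewrite -cR_le cvnorm2 exprMn rmorphM /= cvnorm2.
Qed.

Lemma qfZ n (c : C) (x : 'cV[C]_n) : qf (c *: x) = `|c|^+2 * qf x.
Proof.
rewrite !qfE mulr_sumr; apply: eq_bigr => k _.
by rewrite mxE normrM exprMn.
Qed.

Lemma qf_mul_le n (B : 'M[C]_n) (x : 'cV[C]_n) :
  qf (B *m x) <= (\sum_i \sum_j `|B i j|^+2) * qf x.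
Proof.
rewrite qfE qfE mulr_suml; apply: ler_sum => i _.
rewrite mxE; exact: CS.
Qed.

Lemma cR_sqr_norm (a : R) : `|cR a|^+2 = cR (a^+2).
Proof. by rewrite normCK conj_Creal ?rmorphXn ?expr2 //; apply/complex_realP; exists a. Qed.

Lemma cvnorm_eq n m (x : 'cV[C]_n) (y : 'cV[C]_m) (a : R) : 0 <= a ->
  qf x = cR (a ^+ 2) * qf y -> cvnorm x = a * cvnorm y.
Proof.
move=> a0 h; apply/eqP; rewrite -(@eqrXn2 _ 2) ?mulr_ge0 ?cvnorm_ge0 //.
apply/eqP/complexI; by rewrite cvnorm2 exprMn rmorphM /= cvnorm2.
Qed.

Lemma cvnorm_eq0 n (x : 'cV[C]_n) : (cvnorm x == 0) = (x == 0).
Proof.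
by rewrite -qf_eq0 -cvnorm2 fmorph_eq0 sqrf_eq0.
Qed.

Lemma cvnormZ n (a : R) (x : 'cV[C]_n) : 0 <= a -> cvnorm (cR a *: x) = a * cvnorm x.
Proof. by move=> a0; apply: cvnorm_eq => //; rewrite qfZ cR_sqr_norm. Qed.

Definition frob n (B : 'M[C]_n) : R :=
  \sum_i \sum_j ComplexField.Normc.normc (B i j) ^+ 2.

Lemma frobE n (B : 'M[C]_n) : cR (frob B) = \sum_i \sum_j `|B i j|^+2.
Proof.
rewrite rmorph_sum; apply: eq_bigr => i _; rewrite rmorph_sum.
by apply: eq_bigr => j _; rewrite rmorphXn /= normc_C.
Qed.

Lemma frob_ge0 n (B : 'M[C]_n) : 0 <= frob B.
Proof. by apply: sumr_ge0 => i _; apply: sumr_ge0 => j _; apply: sqr_ge0. Qed.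

Lemma spnorm_has_sup n (B : 'M[C]_n) (u : 'cV[C]_n) : cvnorm u = 1 ->
  has_sup [set cvnorm (B *m x) | x in [set x : 'cV[C]_n | cvnorm x = 1]].
Proof.
move=> u1; split; first by exists (cvnorm (B *m u)); exists u.
exists (1 + frob B) => _ [x /= x1 <-].
have h2 : cvnorm (B *m x) ^+ 2 <= frob B.
  rewrite -cR_le cvnorm2 frobE.
  apply: le_trans (qf_mul_le B x) _.
  by rewrite -cvnorm2 x1 expr1n rmorph1 mulr1.
have [le1|gt1] := lerP (cvnorm (B *m x)) 1.
  by rewrite -[cvnorm _]addr0 lerD // frob_ge0.
apply: le_trans (_ : frob B <= _); last by rewrite lerDr.
by apply: le_trans h2; rewrite expr2 ler_peMr ?(ltW gt1) ?cvnorm_ge0.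
Qed.

Lemma spnorm_ub n (B : 'M[C]_n) (x : 'cV[C]_n) :
  cvnorm (B *m x) <= spnorm B * cvnorm x.
Proof.
have [->|x0] := eqVneq x 0.
  by rewrite mulmx0 (eqP (introT eqP (erefl (0 : 'cV[C]_n)))) ; move: (cvnorm_eq0 (0 : 'cV[C]_n)); rewrite eqxx => /eqP->; rewrite mulr0.
have cpos : 0 < cvnorm x by rewrite lt_def cvnorm_eq0 x0 cvnorm_ge0.
set u := cR (cvnorm x)^-1 *: x.
have u1 : cvnorm u = 1 by rewrite /u cvnormZ ?invr_ge0 ?(ltW cpos) // mulVf // gt_eqF.
have hs := spnorm_has_sup B u1.
have : cvnorm (B *m u) <= spnorm B.
  by apply: (sup_upper_bound hs); exists u.
rewrite /u -scalemxAr cvnormZ ?invr_ge0 ?(ltW cpos) //.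
by move=> h; rewrite -ler_pdivrMr // mulrC.
Qed.

Lemma spnorm_ge0 n (B : 'M[C]_n) (x : 'cV[C]_n) : x != 0 -> 0 <= spnorm B.
Proof.
move=> x0; have cpos : 0 < cvnorm x by rewrite lt_def cvnorm_eq0 x0 cvnorm_ge0.
by rewrite -(pmulr_lge0 _ cpos); apply: le_trans (spnorm_ub B x); apply: cvnorm_ge0.
Qed.

Lemma qf_sp n (B : 'M[C]_n) (x : 'cV[C]_n) :
  qf (B *m x) <= cR (spnorm B ^+ 2) * qf x.
Proof.
rewrite -!cvnorm2 -rmorphM /= cR_le -exprMn ler_sqr ?nnegrE ?cvnorm_ge0 //.
  exact: spnorm_ub.
exact: le_trans (cvnorm_ge0 _) (spnorm_ub B x).
Qed.

Lemma qf_spT n (B : 'M[C]_n) (x : 'cV[C]_n) :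
  qf (B^t* *m x) <= cR (spnorm B ^+ 2) * qf x.
Proof.
set y := B^t* *m x.
have e : qf y = \sum_k (x k 0)^* * (B *m y) k 0.
  rewrite /qf /y trmx_mul map_mxM trmxCK -mulmxA mxE.
  by apply: eq_bigr => k _; rewrite !mxE.
have cs : qf y ^+ 2 <= qf x * qf (B *m y).
  have -> : qf y ^+ 2 = `|qf y| ^+ 2 by rewrite ger0_norm ?qf_ge0.
  rewrite e !qfE; apply: le_trans (CS _ _) _.
  by rewrite (eq_bigr (fun k => `|x k 0|^+2)) // => k _; rewrite norm_conjC.
have s0 : 0 <= cR (spnorm B ^+ 2) by rewrite ler0c sqr_ge0.
have [y0|ypos] := eqVneq (qf y) 0.
  by rewrite y0 mulr_ge0 ?qf_ge0.
have yp : 0 < qf y by rewrite lt_def ypos qf_ge0.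
have : qf y ^+ 2 <= qf x * (cR (spnorm B ^+ 2) * qf y).
  by apply: le_trans cs _; apply: ler_wpM2l; [apply: qf_ge0|apply: qf_sp].
by rewrite expr2 mulrA mulrC [X in _ <= X]mulrC ler_pM2l // mulrC.
Qed.

Lemma cplx_adj m n (X : 'M[R]_(m, n)) : (map_mx (real_complex R) X)^t* = map_mx (real_complex R) X^T.
Proof.
apply/matrixP => i j; rewrite !mxE conj_Creal //.
by apply/complex_realP; eexists.
Qed.
End Cplx.

Section RealLem.
Variable R : realType.

Lemma posdef_unit d (A : 'M[R]_d) : posdefmx A -> A \in unitmx.
Proof.
move=> hA; rewrite unitmxE unitfE; apply/negP => /det0P [v v0 vA].
have := hA v^T; rewrite trmx_eq0 => /(_ v0).
by rewrite trmxK vA mul0mx mxE ltxx.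
Qed.

Lemma row_posdef d (A : 'M[R]_d) (v : 'rV[R]_d) : posdefmx A -> v != 0 ->
  0 < (v *m A *m v^T) 0 0.
Proof. by move=> hA v0; have := hA v^T; rewrite trmx_eq0 trmxK => /(_ v0). Qed.

Lemma row_pos d (v : 'rV[R]_d) : v != 0 -> 0 < (v *m v^T) 0 0.
Proof.
move=> v0.
have e : (v *m v^T) 0 0 = \sum_i v 0 i ^+ 2.
  by rewrite mxE; apply: eq_bigr => i _; rewrite !mxE expr2.
have s0 : 0 <= \sum_i v 0 i ^+ 2 by apply: sumr_ge0 => i _; apply: sqr_ge0.
rewrite e lt_def s0 andbT.
apply: contra v0 => /eqP h; apply/eqP/matrixP => i j; rewrite ord1 mxE.
have := psumr_eq0P (fun i _ => sqr_ge0 (v 0 i)) h.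
by move=> /(_ j isT) /eqP; rewrite sqrf_eq0 => /eqP.
Qed.
End RealLem.

Section Main.
Variables (R : realType) (d : nat) (D Cm K S : 'M[R]_d) (lam mu : R).
Local Notation C := (R[i]).
Local Notation f := (real_complex R).
Hypothesis hD : spdmx D.
Hypothesis hC : pos_stable Cm.
Hypothesis hK : spdmx K.
Hypothesis hL : 2%:R *: D = Cm *m K + K *m Cm^T.
Hypothesis hS : is_sqrtmx D S.
Hypothesis hlam : is_min_eig (S *m invmx K *m S) lam.
Hypothesis hmu : is_min_re_spec Cm mu.

Local Notation Si := (invmx S).
Local Notation T := (Si *m Cm *m S).
Local Notation N := (Si *m K *m Si).
Local Notation M := (S *m invmx K *m S).

Lemma Sunit : S \in unitmx. Proof. exact: posdef_unit hS.1.2. Qed.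
Lemma Kunit : K \in unitmx. Proof. exact: posdef_unit hK.2. Qed.
Lemma ST : S^T = S. Proof. exact: hS.1.1. Qed.
Lemma KT : K^T = K. Proof. exact: hK.1. Qed.
Lemma SiT : Si^T = Si. Proof. by rewrite trmx_inv ST. Qed.

Lemma NT : N^T = N.
Proof. by rewrite !trmx_mul SiT KT mulmxA. Qed.

Lemma MT : M^T = M.
Proof. by rewrite !trmx_mul ST trmx_inv KT mulmxA. Qed.

Lemma MN : M *m N = 1%:M.
Proof.
have Su := Sunit; have Ku := Kunit.
by rewrite !mulmxA mulmxK // mulmxKV // mulmxV.
Qed.

Lemma NM : N *m M = 1%:M. Proof. exact: mulmx1C MN. Qed.

Lemma Lyap2 : T *m N + N *m T^T = 2%:R%:M.
Proof.
have Su := Sunit.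
have -> : T *m N = Si *m (Cm *m K) *m Si.
  by rewrite !mulmxA mulmxK.
have -> : N *m T^T = Si *m (K *m Cm^T) *m Si.
  by rewrite !trmx_mul ST SiT !mulmxA mulmxKV.
rewrite -mulmxDl -mulmxDr -hL -hS.2 -scalemxAr -scalemxAl !mulmxA.
by rewrite mulVmx // mul1mx mulmxV // scalemx1.
Qed.

Lemma lampos : 0 < lam.
Proof.
have Su := Sunit; have Ku := Kunit.
have /eigenvalueP [x hx x0] := hlam.1.
set w := x *m S *m invmx K.
have w0 : w != 0.
  apply: contraNneq x0 => w0; have : w *m K *m Si = x by rewrite /w mulmxKV // mulmxK.
  by rewrite w0 !mul0mx => <-.
have e : (x *m M *m x^T) 0 0 = (w *m K *m w^T) 0 0.
  by rewrite /w mulmxKV // !trmx_mul trmx_inv ST KT !mulmxA.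
have := row_posdef hK.2 w0; rewrite -e hx -scalemxAl mxE.
by rewrite pmulr_lgt0 // row_pos.
Qed.
Local Notation Nc := (N ^ f).
Local Notation Mc := (M ^ f).
Local Notation Tc := (T ^ f).
Local Notation Sc := (S ^ f).
Local Notation Cc := (Cm ^ f).

Lemma Nc_herm : Nc^t* = Nc.
Proof. by rewrite cplx_adj NT. Qed.

Lemma Lyapc : Tc *m Nc + Nc *m Tc^T = 2%:R%:M.
Proof. by rewrite map_trmx -!map_mxM -map_mxD Lyap2 map_scalar_mx rmorph_nat. Qed.

Lemma McNc : Mc *m Nc = 1%:M.
Proof. by rewrite -map_mxM MN map_mx1. Qed.

Lemma Mc_sym : Mc^T = Mc.
Proof. by rewrite map_trmx MT. Qed.

Lemma Nbound (y : 'cV[C]_d) : (y^t* *m Nc *m y) 0 0 <= f lam^-1 * qf y.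
Proof.
have lp := lampos.
have := @herm_lb _ _ ((f lam^-1)%:M - Nc) 0 _ _ y.
have fr : (f lam^-1)^* = f lam^-1 by apply: conj_Creal; apply/complex_realP; eexists.
have eq : (y^t* *m ((f lam^-1)%:M - Nc) *m y) 0 0 = f lam^-1 * qf y - (y^t* *m Nc *m y) 0 0.
  rewrite mulmxBr mulmxBl mul_mx_scalar -scalemxAl.
  by rewrite [LHS]mxE; congr (_ + _); rewrite [LHS]mxE.
rewrite mul0r eq subr_ge0; apply.
  apply/is_hermitianmxP; rewrite expr0 scale1r.
  by rewrite linearB /= map_mxB /= Nc_herm tr_scalar_mx map_scalar_mx /= fr.
move=> z z0 e; rewrite mulmxBl mul_scalar_mx => hz.
have hN : Nc *m z = (f lam^-1 - e) *: z.
  by rewrite scalerBl -hz opprB addrC subrK.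
set eta := f lam^-1 - e in hN *.
have etaR : eta^* = eta by apply: herm_eig_real Nc_herm z0 hN.
have eta0 : eta != 0.
  apply: contraNneq z0 => e0; apply/eqP.
  by rewrite -[z]mul1mx -McNc -[Mc *m Nc *m z]mulmxA hN e0 scale0r mulmx0.
have hM : Mc *m z = eta^-1 *: z.
  have h1 : eta *: (Mc *m z) = z.
    by rewrite scalemxAr -hN [Mc *m (Nc *m z)]mulmxA McNc mul1mx.
  by rewrite -[in RHS]h1 scalerA mulVf // scale1r.
have : eta^-1 \is Num.real by rewrite CrealE fmorphV /= etaR.
move=> /complex_realP [r hr].
have hr' : f r = eta^-1 := esym hr.
have r0 : r != 0 by apply: contra_neq (invr_neq0 eta0); rewrite hr => ->; rewrite rmorph0.
have ev : eigenvalue M r.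
  rewrite -(eigenvalue_map f); apply/eigenvalueP; exists z^T; last by rewrite trmx_eq0.
  by rewrite -Mc_sym -trmx_mul hM linearZ /= hr.
have lr := hlam.2 r ev.
have -> : e = f (lam^-1 - r^-1).
  by rewrite rmorphB [X in _ = _ - X]fmorphV /= hr' invrK /eta opprB addrC subrK.
rewrite ler0c subr_ge0.
have [rp|rn] := ltrP 0 r.
  by rewrite lef_pV2 ?posrE.
apply: le_trans (_ : 0 <= _); last by rewrite invr_ge0 ltW.
by rewrite invr_le0.
Qed.

Lemma Tc_adj : Tc^t* = Tc^T.
Proof. by rewrite cplx_adj map_trmx. Qed.

Lemma part1 : lam <= mu.
Proof.
have lp := lampos.
have Su := Sunit.
have Scu : Sc \in unitmx by rewrite map_unitmx.
have [[l hl hRe] _] := hmu.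
have lpos : 0 < complex.Re l := hC hl.
have := hl; rewrite in_setE /spectrum /= => /eigenvalueP [v hv0 v0].
have hv : v *m Cc = l *: v := hv0.
set u := v *m Sc.
have u0 : u != 0.
  apply: contraNneq v0 => u0; apply/eqP.
  by rewrite -[v](mulmxK Scu) -/u u0 mul0mx.
have Tce : Tc = invmx Sc *m Cc *m Sc by rewrite !map_mxM map_invmx.
have uT : u *m Tc = l *: u.
  by rewrite Tce /u !mulmxA mulmxK // hv -scalemxAl.
set y := u^t*.
have yu : y^t* = u by rewrite trmxCK.
have y0 : y != 0.
  apply: contraNneq u0 => y0'; apply/eqP; rewrite -yu y0'.
  by apply/matrixP => i j; rewrite !mxE rmorph0.
set q := (y^t* *m Nc *m y) 0 0.
have q2 : (u *m (Tc *m Nc + Nc *m Tc^T) *m u^t*) 0 0 = 2%:R * qf y.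
  by rewrite Lyapc mul_mx_scalar -scalemxAl [LHS]mxE /qf yu.
have e1 : Tc^T *m u^t* = l^* *: u^t*.
  have : (u *m Tc)^t* = Tc^t* *m u^t* by rewrite trmx_mul map_mxM.
  by rewrite uT Tc_adj linearZ /= map_mxZ => <-.
have q3 : (u *m (Tc *m Nc + Nc *m Tc^T) *m u^t*) 0 0 = (l + l^*) * q.
  rewrite mulmxDr mulmxDl [LHS]mxE.
  have -> : u *m (Tc *m Nc) *m u^t* = l *: (u *m Nc *m u^t*).
    by rewrite mulmxA uT -!scalemxAl.
  have -> : u *m (Nc *m Tc^T) *m u^t* = l^* *: (u *m Nc *m u^t*).
    by rewrite -[u *m (Nc *m Tc^T) *m u^t*]mulmxA -[Nc *m Tc^T *m u^t*]mulmxA e1 -!scalemxAr mulmxA.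
  by rewrite [X in X + _]mxE [X in _ + X]mxE /q yu mulrDl.
have lre : l + l^* = 2%:R * f mu.
  by rewrite -hRe complexRe ReE mulrC divfK // pnatr_eq0.
have hq : qf y = f mu * q.
  apply: (@mulfI _ 2%:R); first by rewrite pnatr_eq0.
  by rewrite -q2 q3 lre mulrA.
have hb := Nbound y; rewrite -/q in hb.
have mu0 : 0 <= f mu by rewrite ler0c -hRe ltW.
have : qf y <= f mu * (f lam^-1 * qf y).
  by rewrite {1}hq; apply: ler_wpM2l.
rewrite mulrA -rmorphM /= -[X in X <= _]mul1r ler_pM2r ?qf_gt0 //.
by rewrite -(rmorph1 f) lecR ler_pdivlMr // mul1r.
Qed.

Lemma mupos : 0 < mu.
Proof. by have [[l hl <-] _] := hmu; apply: hC. Qed.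

Lemma eig_spec (s : C) (r : 'rV[C]_d) : r != 0 -> r *m Tc = s *: r ->
  f mu *+ 2 <= s + s^*.
Proof.
move=> r0 hr.
have Su := Sunit.
have Scu : Sc \in unitmx by rewrite map_unitmx.
have Tce : Tc = invmx Sc *m Cc *m Sc by rewrite !map_mxM map_invmx.
set w := r *m invmx Sc.
have w0 : w != 0.
  apply: contraNneq r0 => w0; apply/eqP.
  by rewrite -[r](mulmxKV Scu) -/w w0 mul0mx.
have hw : w *m Cc = s *: w.
  have : r *m Tc *m invmx Sc = s *: w by rewrite hr -scalemxAl.
  by rewrite Tce !mulmxA mulmxK.
have ev : s \in spectrum Cm.
  by rewrite in_setE /spectrum /=; apply/eigenvalueP; exists w.
have := hmu.2 s ev.
rewrite -lecR complexRe ReE => h.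
have : f mu *+ 2 <= (s + s^*) / 2 *+ 2 by rewrite lerMn2r.
by rewrite -mulr_natr divfK // pnatr_eq0.
Qed.

Lemma part2 (A Lam : 'M[C]_d) :
  is_diag_mx Lam -> A \in unitmx ->
  cplxmx (invmx S *m Cm *m S) = A *m Lam *m invmx A ->
  mu <= condnum A ^+ 2 * lam.
Proof.
move=> /diag_mxP [s ->] Au hT0.
have hT : Tc = A *m diag_mx s *m invmx A := hT0.
have lp := lampos; have mp := mupos.
set Ai := invmx A.
have Aiu : Ai \in unitmx by rewrite unitmx_inv.
set sA := spnorm A; set sAi := spnorm Ai.
set c := sAi ^+ 2.
set B := Ai *m Nc *m Ai^t*.
have AAi : A *m Ai = 1%:M by rewrite mulmxV.
have AiAt : Ai^t* *m A^t* = 1%:M by rewrite -map_mxM -trmx_mul AAi trmx1 map_mx1.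
have NcB : Nc = A *m B *m A^t*.
  by rewrite /B !mulmxA AAi mul1mx -[Nc *m Ai^t* *m A^t*]mulmxA AiAt mulmx1.
have Bh : B^t* = B by rewrite /B !adjM trmxCK Nc_herm mulmxA.
have h1 : Ai *m Tc = diag_mx s *m Ai by rewrite hT -!mulmxA mulKmx.
have h2 : Tc^t* *m Ai^t* = Ai^t* *m (diag_mx s)^t* by rewrite -!adjM h1.
have key : diag_mx s *m B + B *m (diag_mx s)^t* = 2%:R *: (Ai *m Ai^t*).
  by apply: conj_lyap h1 h2 _; rewrite Tc_adj Lyapc.
have sk : forall k, f mu *+ 2 <= s 0 k + (s 0 k)^*.
  move=> k; apply: (@eig_spec _ (row k Ai)).
    apply/eqP => /rowP rk0.
    have := congr1 (fun X : 'M[C]_d => X k k) (mulVmx Au).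
    rewrite !mxE eqxx /= big1 => [/eqP|j _]; first by rewrite eq_sym oner_eq0.
    by have := rk0 j; rewrite !mxE => ->; rewrite mul0r.
  rewrite -row_mul h1; apply/rowP => j; rewrite !mxE.
  by rewrite (bigD1 k) //= big1 => [|i ik]; rewrite !mxE ?eqxx ?addr0 // eq_sym (negbTE ik) mulr0n mul0r.
have c0 : 0 <= c by rewrite sqr_ge0.
have cm0 : 0 <= c / mu by rewrite divr_ge0 // ltW.
have fcm : (f (c / mu))^* = f (c / mu) by apply: conj_Creal; apply/complex_realP; eexists.
have Bb : forall w : 'cV[C]_d, (w^t* *m B *m w) 0 0 <= f (c / mu) * qf w.
  apply: herm_ub => // z z0 e hz.
  have eR : e^* = e by apply: herm_eig_real Bh z0 hz.
  set W := (z^t* *m diag_mx s *m z) 0 0 + (z^t* *m (diag_mx s)^t* *m z) 0 0.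
  have eW : e * W = 2%:R * qf (Ai^t* *m z).
    have := congr1 (fun X => (z^t* *m X *m z) 0 0) key.
    by rewrite (lyap_form _ Bh hz eR) form_PPt.
  have Wge : f mu *+ 2 * qf z <= W.
    rewrite /W tr_diag_mx map_diag_mx !qf_diag -big_split /=.
    rewrite /qf qf_id mulr_sumr; apply: ler_sum => k _.
    rewrite mxE -mulrDl; apply: ler_wpM2r; first by rewrite mulrC mul_conjC_ge0.
    exact: sk.
  have qz := qf_gt0 z0.
  have Wp : 0 < W.
    apply: lt_le_trans Wge; rewrite pmulr_rgt0 // pmulrn_rgt0 //.
    by rewrite ltcR.
  rewrite -(ler_pM2r Wp) eW.
  apply: le_trans (_ : 2%:R * (f c * qf z) <= _).
    by rewrite ler_pM2l ?ltr0n //; apply: qf_spT.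
  apply: le_trans (_ : f (c / mu) * (f mu *+ 2 * qf z) <= _); last first.
    by apply: ler_wpM2l => //; rewrite ler0c.
  have ab : f (c / mu) * f mu = f c by rewrite -rmorphM /= divfK ?gt_eqF.
  rewrite le_eqVlt; apply/orP; left; apply/eqP.
  rewrite -ab; ring.
have /eigenvalueP [x hx x0] := hlam.1.
have xN : x *m N = lam^-1 *: x.
  have : lam *: (x *m N) = x by rewrite scalemxAl -hx -[x *m M *m N]mulmxA MN mulmx1.
  by move=> h; rewrite -[in RHS]h scalerA mulVf ?gt_eqF // scale1r.
set y := x^T ^ f.
have y0 : y != 0 by rewrite map_mx_eq0 trmx_eq0.
have Ny : Nc *m y = f lam^-1 *: y.
  by rewrite -map_mxM -[N]NT -trmx_mul xN linearZ /= map_mxZ.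
have qy := qf_gt0 y0.
have q1 : (y^t* *m Nc *m y) 0 0 = f lam^-1 * qf y.
  by rewrite -mulmxA Ny -scalemxAr mxE.
set w := A^t* *m y.
have q2 : (y^t* *m Nc *m y) 0 0 = (w^t* *m B *m w) 0 0.
  by rewrite NcB /w form_conj.
have q3 : (y^t* *m Nc *m y) 0 0 <= f (c / mu) * (f (sA ^+ 2) * qf y).
  rewrite q2; apply: le_trans (Bb w) _.
  by apply: ler_wpM2l; [rewrite ler0c|apply: qf_spT].
move: q3; rewrite q1 mulrA -rmorphM /= ler_pM2r // lecR.
rewrite /condnum -/Ai -/sA -/sAi exprMn => h.
have : mu * lam * lam^-1 <= mu * lam * (c / mu * sA ^+ 2).
  by apply: ler_wpM2l => //; rewrite mulr_ge0 // ltW.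
rewrite mulfK ?gt_eqF // => /le_trans; apply.
rewrite le_eqVlt; apply/orP; left; apply/eqP; rewrite /c.
by field; rewrite gt_eqF.
Qed.
End Main.

Unset Implicit Arguments.

Theorem proposition8p1 (R : realType) (d : nat) (hd : (0 < d)%N)
  (D C K sqD : 'M[R]_d) (lamK mu : R) :
  spdmx D -> pos_stable C ->
  spdmx K -> 2%:R *: D = C *m K + K *m C^T ->
  is_sqrtmx D sqD ->
  is_min_eig (sqD *m invmx K *m sqD) lamK ->
  is_min_re_spec C mu ->
  lamK <= mu /\
  (forall (At Lam : 'M[R[i]]_d),
     is_diag_mx Lam -> At \in unitmx ->
     cplxmx (invmx sqD *m C *m sqD) = At *m Lam *m invmx At ->
     mu <= condnum At ^+ 2 * lamK).
Proof.
move=> hD hC hK hL hS hlam hmu; split.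
  exact: (part1 hC hK hL hS hlam hmu).
move=> At Lam hdg hAu hT.
exact: (part2 hC hK hL hS hlam hmu hdg hAu hT).
Qed.
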